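(* Let $(d_i)_{i\ge1}$ be an alternate Lyndon word, $M$ its alternate Lyndon system, $L_M$ its language, and $\log\beta$ its entropy, with $\beta>1$. Suppose $i\ge1$ and $j$ is a letter such that $d_1d_2\cdots d_{i-1}j\in L_M$ and $(-1)^i(d_i-j)<0$. Then $$f_\beta(d_1d_2\cdots d_{i-1}j)\ge-\frac{\beta}{\beta+1}.$$
   Context: Alternate order: for two words $x=x_1x_2\cdots$, $y=y_1y_2\cdots$ over a finite alphabet of integers, $x\prec y$ iff there is $k$ with $x_i=y_i$ for all $i<k$ and $(-1)^k(x_k-y_k)<0$; $x\preceq y$ iff $x=y$ or $x\prec y$. An alternate Lyndon word is an infinite word $(d_i)_{i\ge1}$ with $d_1d_2\cdots\preceq d_nd_{n+1}\cdots$ for all $n\ge1$. Its alternate Lyndon system $M$ is the set of infinite words $x$ over $\{0,\dots,d_1\}$ with $d_1d_2\cdots\preceq x_kx_{k+1}\cdots$ for all $k\ge1$; $L_M$ is the set of its finite factors; its entropy is $\lim_n\frac1n\log H_n$ with $H_n$ the number of words of length $n$ in $L_M$. For a finite word, $f_\beta(x_1\cdots x_n)=\sum_{k=1}^n x_k(-\beta)^{-k}$. *)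

(* Defs.v *)
From Stdlib Require Import Reals ZArith List.
Import ListNotations.
Open Scope R_scope.

(* Infinite words are functions nat -> nat, 0-indexed: x i is the paper's x_{i+1}. *)
Definition iword := nat -> nat.

Definition shift (x : iword) (n : nat) : iword := fun i => x (n + i)%nat.

(* Alternate order: x < y iff there is k (1-based) with x_i = y_i for i<k and
   (-1)^k (x_k - y_k) < 0.  With 0-based k this is (-1)^(k+1). *)
Definition alt_lt (x y : iword) : Prop :=
  exists k : nat,
    (forall i, (i < k)%nat -> x i = y i) /\
    ((-1) ^ Z.of_nat (k + 1) * (Z.of_nat (x k) - Z.of_nat (y k)) < 0)%Z.

Definition alt_le (x y : iword) : Prop := (forall i, x i = y i) \/ alt_lt x y.

Definition alt_lyndon (d : iword) : Prop := forall n : nat, alt_le d (shift d n).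

Definition inM (d : iword) (x : iword) : Prop :=
  (forall i, (x i <= d 0%nat)%nat) /\ forall k : nat, alt_le d (shift x k).

Definition inLM (d : iword) (w : list nat) : Prop :=
  exists x, inM d x /\ exists k : nat,
    forall i, (i < length w)%nat -> nth i w 0%nat = x (k + i)%nat.

Definition count_words (d : iword) (n H : nat) : Prop :=
  exists l : list (list nat),
    NoDup l /\ (forall w, In w l <-> (length w = n /\ inLM d w)) /\ length l = H.

Definition has_entropy (d : iword) (e : R) : Prop :=
  exists H : nat -> nat,
    (forall n, count_words d n (H n)) /\
    Un_cv (fun n => ln (INR (H n)) / INR n) e.

(* f_beta(x_1 ... x_n) = sum_{k=1}^n x_k (-beta)^{-k};
   fbeta_from beta k w sums the letters of w with exponents -k, -(k+1), ... *)
Fixpoint fbeta_from (beta : R) (k : nat) (w : list nat) : R :=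
  match w with
  | [] => 0
  | a :: w' => INR a * / ((- beta) ^ k) + fbeta_from beta (S k) w'
  end.

Definition fbeta (beta : R) (w : list nat) : R := fbeta_from beta 1 w.

(* Main.v *)
Require Import Defs.
From Stdlib Require Import Reals ZArith List.
From Stdlib Require Import Lra Lia Classical FunctionalExtensionality Arith.
From Coquelicot Require Import Coquelicot.
Import ListNotations.
Open Scope R_scope.

Lemma sgn_IZR n : IZR ((-1) ^ Z.of_nat n) = (-1) ^ n.
Proof.
  induction n. reflexivity.
  rewrite Nat2Z.inj_succ, Z.pow_succ_r by lia. rewrite mult_IZR, IHn. simpl. ring.
Qed.

Lemma sgn_cases n : (-1) ^ n = 1 \/ (-1) ^ n = -1.
Proof. induction n; simpl; [left; ring|]. destruct IHn as [H|H]; rewrite H; [right|left]; ring. Qed.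

Lemma alt_lt_R x y : alt_lt x y -> exists k, (forall i, (i < k)%nat -> x i = y i) /\
   (-1) ^ (k+1) * (INR (x k) - INR (y k)) <= -1.
Proof.
  intros [k [H1 H2]]. exists k. split; auto.
  assert (Z : ((-1) ^ Z.of_nat (k + 1) * (Z.of_nat (x k) - Z.of_nat (y k)) <= -1)%Z) by lia.
  apply IZR_le in Z. rewrite mult_IZR, sgn_IZR, minus_IZR, <- !INR_IZR_INZ in Z. exact Z.
Qed.

Lemma R_alt_lt x y k : (forall i, (i < k)%nat -> x i = y i) ->
   (-1) ^ (k+1) * (INR (x k) - INR (y k)) < 0 -> alt_lt x y.
Proof.
  intros H1 H2. exists k. split; auto. apply lt_IZR.
  rewrite mult_IZR, sgn_IZR, minus_IZR, <- !INR_IZR_INZ. exact H2.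
Qed.

Lemma alt_lt_trans x y z : alt_lt x y -> alt_lt y z -> alt_lt x z.
Proof.
  intros Hxy Hyz. apply alt_lt_R in Hxy as [k1 [E1 S1]]. apply alt_lt_R in Hyz as [k2 [E2 S2]].
  destruct (lt_eq_lt_dec k1 k2) as [[Hl|He]|Hl].
  - apply (R_alt_lt _ _ k1).
    + intros i Hi. rewrite E1 by lia. apply E2; lia.
    + rewrite <- (E2 k1 Hl). lra.
  - subst. apply (R_alt_lt _ _ k2).
    + intros i Hi. rewrite E1 by lia. apply E2; lia.
    + replace ((-1) ^ (k2 + 1) * (INR (x k2) - INR (z k2))) with
        ((-1) ^ (k2 + 1) * (INR (x k2) - INR (y k2)) + (-1) ^ (k2 + 1) * (INR (y k2) - INR (z k2))) by ring. lra.
  - apply (R_alt_lt _ _ k2).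
    + intros i Hi. rewrite E1 by lia. apply E2; lia.
    + rewrite (E1 k2 Hl). lra.
Qed.

Lemma alt_lt_ext_r x y z : (forall i, y i = z i) -> alt_lt x y -> alt_lt x z.
Proof. intros E [k [H1 H2]]. exists k. split. intros i Hi; rewrite <- E; auto. rewrite <- E; auto. Qed.
Lemma alt_lt_ext_l x y z : (forall i, x i = y i) -> alt_lt x z -> alt_lt y z.
Proof. intros E [k [H1 H2]]. exists k. split. intros i Hi; rewrite <- E; auto. rewrite <- E; auto. Qed.

Lemma alt_lt_le x y z : alt_lt x y -> alt_le y z -> alt_lt x z.
Proof. intros H [E|H']. apply (alt_lt_ext_r _ _ _ E H). eapply alt_lt_trans; eauto. Qed.

Lemma alt_le_trans x y z : alt_le x y -> alt_le y z -> alt_le x z.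
Proof.
  intros [E|H] H2.
  - destruct H2 as [E2|H2]. left; intro i; rewrite E; auto.
    right. apply (alt_lt_ext_l y x z); auto.
  - right. eapply alt_lt_le; eauto.
Qed.

Lemma least (P : nat -> Prop) n : P n -> exists k, P k /\ forall m, (m < k)%nat -> ~ P m.
Proof.
  induction n as [n IH] using (well_founded_ind lt_wf). intro Hn.
  destruct (classic (exists m, (m < n)%nat /\ P m)) as [[m [Hm Pm]]|H].
  - apply (IH m Hm Pm).
  - exists n. split; auto. intros m Hm Pm. apply H. eauto.
Qed.

Lemma trichotomy x y : (forall i, x i = y i) \/ alt_lt x y \/ alt_lt y x.
Proof.
  destruct (classic (forall i, x i = y i)) as [H|H]; [left; auto|right].
  apply not_all_ex_not in H as [n Hn].
  destruct (least (fun n => x n <> y n) n Hn) as [k [Hk Hm]].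
  assert (E : forall i, (i < k)%nat -> x i = y i).
  { intros i Hi. apply NNPP. apply Hm; auto. }
  assert (INR (x k) <> INR (y k)) by (intro C; apply INR_eq in C; auto).
  destruct (sgn_cases (k+1)) as [s|s].
  - destruct (Rlt_or_le (INR (x k)) (INR (y k))).
    + left. apply (R_alt_lt _ _ k E). rewrite s; lra.
    + right. apply (R_alt_lt _ _ k). intros i Hi; symmetry; auto. rewrite s; lra.
  - destruct (Rlt_or_le (INR (x k)) (INR (y k))).
    + right. apply (R_alt_lt _ _ k). intros i Hi; symmetry; auto. rewrite s; lra.
    + left. apply (R_alt_lt _ _ k E). rewrite s; lra.
Qed.

Lemma digit_le d y : alt_le d y -> (y 0 <= d 0)%nat.
Proof.
  intros [E|H]. rewrite E; lia.
  apply alt_lt_R in H as [k [E S]]. destruct k.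
  - simpl in S. apply INR_le. lra.
  - rewrite E by lia. lia.
Qed.

Lemma arch_nat r : exists n : nat, r < INR n.
Proof.
  destruct (archimed (Rabs r)) as [H1 _].
  assert (0 <= IZR (up (Rabs r))) by (pose proof (Rabs_pos r); lra).
  exists (Z.to_nat (up (Rabs r))). rewrite INR_IZR_INZ, Z2Nat.id.
  - pose proof (Rle_abs r). lra.
  - apply le_IZR. exact H.
Qed.

Definition lb (be : R) := - (be / (be + 1)).
Definition dig be x : nat := Z.to_nat (Int_part (- be * x - lb be)).
Definition Tm be x := - be * x - INR (dig be x).
Definition orb be x k := Nat.iter k (Tm be) x.
Definition bx be x k := dig be (orb be x k).
Definition inI be x := lb be <= x < lb be + 1.

Lemma lb_facts be : 1 < be -> -1 < lb be < 0 /\ be * (lb be + 1) = - lb be.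
Proof.
  intro H. unfold lb.
  assert (E : be / (be + 1) = 1 - / (be + 1)) by (field; lra).
  assert (P : 0 < / (be + 1)) by (apply Rinv_0_lt_compat; lra).
  assert (P2 : / (be + 1) < 1) by (rewrite <- Rinv_1; apply Rinv_lt_contravar; lra).
  rewrite E. split; [lra|]. field. lra.
Qed.

Lemma dig_spec be x : 1 < be -> inI be x ->
  INR (dig be x) <= - be * x - lb be < INR (dig be x) + 1.
Proof.
  intros Hb [Hx1 Hx2]. destruct (lb_facts be Hb) as [_ Hl].
  set (z := - be * x - lb be).
  assert (Hz : 0 <= z).
  { unfold z. assert (be * x <= be * (lb be + 1)) by (apply Rmult_le_compat_l; lra). lra. }
  destruct (base_Int_part z) as [B1 B2].
  assert (Hp : (0 <= Int_part z)%Z).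
  { assert (-1 < IZR (Int_part z)) by lra. apply lt_IZR in H. lia. }
  unfold dig. fold z. rewrite INR_IZR_INZ, Z2Nat.id by exact Hp. lra.
Qed.

Lemma Tm_I be x : 1 < be -> inI be x -> inI be (Tm be x).
Proof. intros Hb Hx. pose proof (dig_spec be x Hb Hx). unfold inI, Tm. lra. Qed.

Lemma orb_S be x k : orb be x (S k) = Tm be (orb be x k).
Proof. reflexivity. Qed.

Lemma orb_I be x k : 1 < be -> inI be x -> inI be (orb be x k).
Proof. intros Hb Hx. induction k. exact Hx. rewrite orb_S. apply Tm_I; auto. Qed.

Lemma dig_mono be x y : 1 < be -> inI be x -> inI be y -> x < y -> (dig be y <= dig be x)%nat.
Proof.
  intros Hb Hx Hy Hxy. pose proof (dig_spec be x Hb Hx). pose proof (dig_spec be y Hb Hy).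
  assert (be * x < be * y) by (apply Rmult_lt_compat_l; lra).
  assert (K : INR (dig be y) < INR (S (dig be x))) by (rewrite S_INR; lra).
  apply INR_lt in K. lia.
Qed.

Lemma mono_step be x y n : 1 < be -> inI be x -> inI be y -> x < y ->
  alt_lt (bx be x) (bx be y) \/
  ((forall i, (i < n)%nat -> bx be x i = bx be y i) /\ (-1) ^ n * (orb be y n - orb be x n) > 0).
Proof.
  intros Hb Hx Hy Hxy. induction n.
  - right. split. intros; lia. simpl. lra.
  - destruct IHn as [H|[Heq Hs]]; [left; auto|].
    pose proof (orb_I be x n Hb Hx) as Iu. pose proof (orb_I be y n Hb Hy) as Iv.
    destruct (Nat.eq_dec (bx be x n) (bx be y n)) as [E|E].
    + right. split.
      * intros i Hi. destruct (Nat.eq_dec i n). subst; auto. apply Heq; lia.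
      * rewrite !orb_S. unfold Tm. unfold bx in E. rewrite E.
        replace ((-1) ^ S n * (- be * orb be y n - INR (dig be (orb be y n)) -
          (- be * orb be x n - INR (dig be (orb be y n))))) with
          (be * ((-1) ^ n * (orb be y n - orb be x n))) by (simpl; ring).
        apply Rmult_lt_0_compat; lra.
    + left. apply (R_alt_lt _ _ n Heq). unfold bx in *.
      replace (n+1)%nat with (S n) by lia. simpl.
      destruct (sgn_cases n) as [s|s]; rewrite s in *.
      * assert (dig be (orb be y n) <= dig be (orb be x n))%nat by (apply dig_mono; auto; lra).
        assert (dig be (orb be y n) < dig be (orb be x n))%nat by lia. apply lt_INR in H0. lra.
      * assert (dig be (orb be x n) <= dig be (orb be y n))%nat by (apply dig_mono; auto; lra).
        assert (dig be (orb be x n) < dig be (orb be y n))%nat by lia. apply lt_INR in H0. lra.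
Qed.

Lemma orb_diff be x y n : (forall i, (i < n)%nat -> bx be x i = bx be y i) ->
  orb be y n - orb be x n = (- be) ^ n * (y - x).
Proof.
  induction n; intro H. simpl; ring.
  rewrite !orb_S. unfold Tm. assert (E : bx be x n = bx be y n) by (apply H; lia).
  unfold bx in E. rewrite E.
  replace ((- be) ^ S n * (y - x)) with (- be * ((- be) ^ n * (y - x))) by (simpl; ring).
  rewrite <- IHn by (intros; apply H; lia). ring.
Qed.

Lemma pow_grow be C : 1 < be -> exists n, C < be ^ n.
Proof.
  intro Hb. destruct (arch_nat (C / (be - 1))) as [n Hn]. exists n.
  pose proof (Rle_pow_lin (be - 1) n) as P. replace (1 + (be - 1)) with be in P by ring.
  assert (C < INR n * (be - 1) + 1).
  { apply (Rmult_lt_compat_r (be - 1)) in Hn; [|lra]. unfold Rdiv in Hn.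
    rewrite Rmult_assoc, Rinv_l in Hn by lra. lra. }
  specialize (P ltac:(lra)). lra.
Qed.

Lemma sgn_pow be n : (-1) ^ n * (- be) ^ n = be ^ n.
Proof.
  replace (- be) with (-1 * be) by ring. rewrite Rpow_mult_distr, <- Rmult_assoc, <- Rpow_mult_distr.
  replace (-1 * -1) with 1 by ring. rewrite pow1. ring.
Qed.

Lemma mono be x y : 1 < be -> inI be x -> inI be y -> x < y -> alt_lt (bx be x) (bx be y).
Proof.
  intros Hb Hx Hy Hxy. destruct (pow_grow be (/ (y - x)) Hb) as [n Hn].
  destruct (mono_step be x y n Hb Hx Hy Hxy) as [H|[Heq Hs]]; auto. exfalso.
  rewrite orb_diff in Hs by auto. rewrite <- Rmult_assoc, sgn_pow in Hs.
  pose proof (orb_I be x n Hb Hx). pose proof (orb_I be y n Hb Hy).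
  pose proof (orb_diff be x y n Heq).
  assert (be ^ n * (y - x) > 1).
  { apply (Rmult_lt_compat_r (y - x)) in Hn; [|lra]. rewrite Rinv_l in Hn by lra. lra. }
  destruct (sgn_cases n) as [s|s].
  - rewrite <- sgn_pow, Rmult_assoc, <- H1, s in H2. unfold inI in *. lra.
  - rewrite <- sgn_pow, Rmult_assoc, <- H1, s in H2. unfold inI in *. lra.
Qed.

Lemma bx_le be y : 1 < be -> inI be y -> alt_le (bx be (lb be)) (bx be y).
Proof.
  intros Hb Hy. destruct (Req_dec y (lb be)). subst. left; auto.
  right. apply mono; auto. unfold inI. pose proof (lb_facts be Hb). lra. unfold inI in Hy. lra.
Qed.

Lemma shift_bx be x m : Defs.shift (bx be x) m = bx be (orb be x m).
Proof.
  apply functional_extensionality. intro i. unfold Defs.shift, bx, orb.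
  rewrite (Nat.add_comm m i), Nat.iter_add. reflexivity.
Qed.

Lemma bx_inM d be x : 1 < be -> alt_le d (bx be (lb be)) -> inI be x -> inM d (bx be x).
Proof.
  intros Hb Hd Hx.
  assert (K : forall k, alt_le d (Defs.shift (bx be x) k)).
  { intro k. rewrite shift_bx. eapply alt_le_trans; [exact Hd|]. apply bx_le; auto. apply orb_I; auto. }
  split; auto. intro i. pose proof (digit_le _ _ (K i)). unfold Defs.shift in H. rewrite Nat.add_0_r in H. exact H.
Qed.

Lemma nth_map_seq (f : nat -> nat) n i : (i < n)%nat -> nth i (map f (seq 0 n)) 0%nat = f i.
Proof.
  intro H. rewrite (@nth_indep _ (map f (seq 0 n)) i 0%nat (f 0%nat)) by (rewrite length_map, length_seq; auto).
  rewrite map_nth, seq_nth by auto. reflexivity.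
Qed.

Lemma NoDup_map_in {A B} (f : A -> B) l :
  (forall a b, In a l -> In b l -> f a = f b -> a = b) -> NoDup l -> NoDup (map f l).
Proof.
  induction l; intros Hi Hn; simpl. constructor. inversion Hn; subst. constructor.
  - intro C. apply in_map_iff in C as [b [E Hb]]. assert (b = a) by (apply Hi; simpl; auto).
    subst; auto.
  - apply IHl; auto. intros; apply Hi; simpl; auto.
Qed.

Lemma count_lower d be n H : 1 < be -> alt_le d (bx be (lb be)) -> count_words d n H ->
  be ^ n - 1 <= INR H.
Proof.
  intros Hb Hd [l [Hnd [Hl Hlen]]].
  set (z := be ^ n). assert (Hz : 1 <= z) by (apply pow_R1_Rle; lra).
  destruct (base_Int_part z) as [B1 B2].
  assert (Hp : (0 <= Int_part z)%Z).
  { assert (-1 < IZR (Int_part z)) by lra. apply lt_IZR in H0. lia. }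
  set (N := Z.to_nat (Int_part z)).
  assert (HN : INR N = IZR (Int_part z)) by (unfold N; rewrite INR_IZR_INZ, Z2Nat.id; auto).
  set (pts := fun t : nat => lb be + INR t / z).
  set (word := fun t => map (bx be (pts t)) (seq 0 n)).
  assert (PI : forall t, (t < N)%nat -> inI be (pts t)).
  { intros t Ht. assert (Ht' : INR (S t) <= INR N) by (apply le_INR; lia). rewrite S_INR in Ht'. unfold pts, inI. split.
    - assert (0 <= INR t / z) by (apply Rdiv_le_0_compat; [apply pos_INR|lra]). lra.
    - assert (INR t / z < 1); [|lra]. apply (Rmult_lt_reg_r z); [lra|].
      unfold Rdiv. rewrite Rmult_assoc, Rinv_l by lra. lra. }
  assert (Hinj : forall a b, In a (seq 0 N) -> In b (seq 0 N) -> word a = word b -> a = b).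
  { intros a b Ha Hb' E. apply in_seq in Ha. apply in_seq in Hb'.
    assert (Eq : forall i, (i < n)%nat -> bx be (pts a) i = bx be (pts b) i).
    { intros i Hi. rewrite <- (nth_map_seq (bx be (pts a)) n i Hi), <- (nth_map_seq (bx be (pts b)) n i Hi).
      unfold word in E. rewrite E. reflexivity. }
    pose proof (orb_diff be _ _ n Eq) as D.
    pose proof (orb_I be _ n Hb (PI a ltac:(lia))). pose proof (orb_I be _ n Hb (PI b ltac:(lia))).
    assert (Ab : Rabs (orb be (pts b) n - orb be (pts a) n) < 1) by (unfold inI in *; apply Rabs_def1; lra).
    rewrite D, Rabs_mult, <- RPow_abs, Rabs_Ropp, Rabs_pos_eq in Ab by lra. fold z in Ab.
    replace (pts b - pts a) with ((INR b - INR a) / z) in Ab by (unfold pts; field; lra).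
    unfold Rdiv in Ab. rewrite Rabs_mult, (Rabs_pos_eq (/ z)) in Ab by (left; apply Rinv_0_lt_compat; lra).
    rewrite <- Rmult_assoc, (Rmult_comm z), Rmult_assoc, Rinv_r, Rmult_1_r in Ab by lra.
    destruct (lt_eq_lt_dec a b) as [[Hab|Hab]|Hab]; auto; exfalso.
    - assert (Hab' : INR (S a) <= INR b) by (apply le_INR; lia). rewrite S_INR in Hab'. rewrite Rabs_pos_eq in Ab; lra.
    - assert (Hab' : INR (S b) <= INR a) by (apply le_INR; lia). rewrite S_INR in Hab'. rewrite Rabs_left in Ab; lra. }
  assert (Hnd2 : NoDup (map word (seq 0 N))) by (apply NoDup_map_in; auto; apply seq_NoDup).
  assert (Hinc : incl (map word (seq 0 N)) l).
  { intros w Hw. apply in_map_iff in Hw as [t [E Ht]]. apply in_seq in Ht. subst w. apply Hl. split.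
    - unfold word. rewrite length_map, length_seq. auto.
    - exists (bx be (pts t)). split. apply bx_inM; auto. apply PI; lia.
      exists 0%nat. intros i Hi. unfold word in *. rewrite length_map, length_seq in Hi.
      rewrite nth_map_seq by auto. reflexivity. }
  pose proof (NoDup_incl_length Hnd2 Hinc). rewrite length_map, length_seq in H0.
  apply le_INR in H0. rewrite Hlen in H0. fold z. lra.
Qed.

Definition V be (x : iword) := Series (fun k => INR (x k) * (/ - be) ^ (S k)).

Lemma q_eq be : 1 < be -> / - be = - / be.
Proof. intro; apply Rinv_opp. Qed.

Lemma abs_q be : 1 < be -> Rabs (/ - be) = / be.
Proof. intro H. rewrite q_eq, Rabs_Ropp, Rabs_pos_eq; auto. left; apply Rinv_0_lt_compat; lra. Qed.

Lemma ib_lt be : 1 < be -> 0 < / be < 1.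
Proof. intro H. split. apply Rinv_0_lt_compat; lra. rewrite <- Rinv_1. apply Rinv_lt_contravar; lra. Qed.

Lemma geom_ex be A : 1 < be -> ex_series (fun k => INR A * (/ be) ^ (S k)).
Proof.
  intro H. pose proof (ib_lt be H).
  apply (ex_series_ext (fun k => (INR A * / be) * ((/ be) ^ k))).
  { intro k. simpl. ring. }
  apply (@ex_series_scal_l R_AbsRing R_NormedModule). apply ex_series_geom. rewrite Rabs_pos_eq; lra.
Qed.

Lemma term_bound be A (x : iword) k : 1 < be -> (forall i, (x i <= A)%nat) ->
  Rabs (INR (x k) * (/ - be) ^ (S k)) <= INR A * (/ be) ^ (S k).
Proof.
  intros H Hx. rewrite Rabs_mult, <- RPow_abs, abs_q, Rabs_pos_eq by (auto; apply pos_INR).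
  apply Rmult_le_compat_r. apply pow_le. pose proof (ib_lt be H); lra. apply le_INR; auto.
Qed.

Lemma V_ex be A x : 1 < be -> (forall i, (x i <= A)%nat) ->
  ex_series (fun k => INR (x k) * (/ - be) ^ (S k)).
Proof.
  intros H Hx. apply (@ex_series_le R_AbsRing R_CompleteNormedModule _ (fun k => INR A * (/ be) ^ (S k))).
  - intro k. apply (term_bound be A x k H Hx).
  - apply geom_ex; auto.
Qed.

Lemma V_bound be A x : 1 < be -> (forall i, (x i <= A)%nat) -> Rabs (V be x) <= INR A / (be - 1).
Proof.
  intros H Hx. pose proof (ib_lt be H). unfold V.
  assert (Ea : ex_series (fun k => Rabs (INR (x k) * (/ - be) ^ (S k)))).
  { apply (@ex_series_le R_AbsRing R_CompleteNormedModule _ (fun k => INR A * (/ be) ^ (S k))).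
    - intro k. unfold norm; simpl. unfold abs; simpl. rewrite Rabs_Rabsolu. apply term_bound; auto.
    - apply geom_ex; auto. }
  eapply Rle_trans. apply Series_Rabs; auto.
  eapply Rle_trans. apply (Series_le _ (fun k => INR A * (/ be) ^ (S k))).
  - intro k. split. apply Rabs_pos. apply term_bound; auto.
  - apply geom_ex; auto.
  - rewrite (Series_ext _ (fun k => (INR A * / be) * (/ be) ^ k)) by (intro; simpl; ring).
    rewrite Series_scal_l, Series_geom by (rewrite Rabs_pos_eq; lra).
    right. field. lra.
Qed.

Lemma shift_shift (x : iword) m k : Defs.shift (Defs.shift x m) k = Defs.shift x (m + k).
Proof. apply functional_extensionality; intro i. unfold Defs.shift. f_equal. lia. Qed.

Lemma V_step be A x m : 1 < be -> (forall i, (x i <= A)%nat) ->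
  V be (Defs.shift x m) = / - be * (INR (x m) + V be (Defs.shift x (S m))).
Proof.
  intros H Hx. unfold V. rewrite Series_incr_1.
  2: { apply (V_ex be A). auto. intro i; unfold Defs.shift; auto. }
  rewrite (Series_ext (fun k => INR (Defs.shift x m (S k)) * (/ - be) ^ S (S k))
     (fun k => / - be * (INR (Defs.shift x (S m) k) * (/ - be) ^ S k))).
  2: { intro k. unfold Defs.shift. replace (m + S k)%nat with (S m + k)%nat by lia. simpl. ring. }
  rewrite Series_scal_l. unfold Defs.shift. rewrite Nat.add_0_r. simpl. ring.
Qed.

Lemma fbeta_app be k u v : fbeta_from be k (u ++ v) = fbeta_from be k u + fbeta_from be (k + length u) v.
Proof.
  revert k. induction u; intro k; simpl. rewrite Nat.add_0_r. ring.
  rewrite IHu. replace (S k + length u)%nat with (k + S (length u))%nat by lia. ring.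
Qed.

Lemma V_split be A d n : 1 < be -> (forall i, (d i <= A)%nat) ->
  V be d = fbeta be (map d (seq 0 n)) + (/ - be) ^ n * V be (Defs.shift d n).
Proof.
  intros H Hd. induction n.
  - simpl. unfold fbeta; simpl. unfold V, Defs.shift. simpl. ring.
  - rewrite IHn, (V_step be A d n H Hd). unfold fbeta. rewrite seq_S, map_app, fbeta_app. simpl.
    rewrite length_map, length_seq. simpl.
    rewrite Rinv_mult, pow_inv. ring.
Qed.

Definition SS be A (x : iword) := (forall i, (x i <= A)%nat) /\
  forall k, alt_le (bx be (lb be)) (Defs.shift x k).

Lemma SS_shift be A x m : SS be A x -> SS be A (Defs.shift x m).
Proof.
  intros [H1 H2]. split. intro i; unfold Defs.shift; auto.
  intro k. rewrite shift_shift. auto.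
Qed.

Lemma V_shift0 be x : V be (Defs.shift x 0) = V be x.
Proof. reflexivity. Qed.

Lemma t_rel be k : 1 < be -> orb be (lb be) k = / - be * (INR (bx be (lb be) k) + orb be (lb be) (S k)).
Proof. intro H. rewrite orb_S. unfold Tm, bx. field. lra. Qed.

Lemma track be A x k : 1 < be -> SS be A x -> (forall i, (i < k)%nat -> bx be (lb be) i = x i) ->
  V be x - lb be = (/ - be) ^ k * (V be (Defs.shift x k) - orb be (lb be) k).
Proof.
  intros Hb HS. induction k; intro Hi.
  - rewrite V_shift0. simpl. ring.
  - rewrite IHk by (intros; apply Hi; lia). rewrite (V_step be A x k Hb (proj1 HS)), (t_rel be k Hb).
    rewrite (Hi k) by lia. simpl. ring.
Qed.

Lemma lim_le be z C : 1 < be -> (forall k, z <= C * (/ be) ^ k) -> z <= 0.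
Proof.
  intros Hb H. destruct (Rle_or_lt z 0) as [|Hz]; auto. exfalso.
  destruct (pow_grow be (C / z) Hb) as [k Hk]. specialize (H k).
  rewrite pow_inv in H. assert (0 < be ^ k) by (apply pow_lt; lra).
  apply (Rmult_le_compat_r (be ^ k)) in H; [|lra]. rewrite Rmult_assoc, Rinv_l in H by lra.
  apply (Rmult_lt_compat_r z) in Hk; auto. unfold Rdiv in Hk. rewrite Rmult_assoc, Rinv_l in Hk by lra. lra.
Qed.

Lemma pow_le1 x k : 0 <= x <= 1 -> x ^ k <= 1.
Proof. intro H. induction k; simpl. lra. replace 1 with (1 * 1) by ring. apply Rmult_le_compat; try lra. apply pow_le; lra. Qed.

Lemma q_pow be k : 1 < be -> (/ - be) ^ k = (-1) ^ k * (/ be) ^ k.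
Proof. intro H. rewrite q_eq by auto. rewrite <- Rpow_mult_distr. f_equal. ring. Qed.

Lemma Qstep be A E : 1 < be -> 0 <= E ->
  (forall x, SS be A x -> lb be - E <= V be x <= lb be + 1 + E) ->
  forall x, SS be A x -> lb be - E * / be <= V be x <= lb be + 1 + E * / be.
Proof.
  intros Hb HE Q x HS. pose proof (ib_lt be Hb) as Ib. destruct (lb_facts be Hb) as [Hl1 Hl2].
  pose proof (Q _ (SS_shift be A x 1 HS)) as Q1.
  pose proof (V_step be A x 0 Hb (proj1 HS)) as St. rewrite V_shift0, q_eq in St by auto.
  assert (Hx0 : 0 <= INR (x 0%nat)) by apply pos_INR.
  assert (HEb : 0 <= E * / be) by (apply Rmult_le_pos; lra).
  split.
  - destruct (proj2 HS 0%nat) as [Eq|Lt].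
    + assert (V be x = lb be); [|lra].
      assert (Z : forall k, Rabs (V be x - lb be) <= (1 + E) * (/ be) ^ k).
      { intro k. rewrite (track be A x k Hb HS) by (intros; apply Eq).
        rewrite Rabs_mult, <- RPow_abs, abs_q by auto. rewrite Rmult_comm.
        apply Rmult_le_compat_r. apply pow_le; lra.
        pose proof (Q _ (SS_shift be A x k HS)). pose proof (orb_I be (lb be) k Hb).
        assert (inI be (lb be)) by (unfold inI; lra). specialize (H0 H1). unfold inI in H0.
        apply Rabs_le. lra. }
      pose proof (lim_le be _ _ Hb Z). pose proof (Rabs_pos (V be x - lb be)).
      assert (Rabs (V be x - lb be) = 0) by lra. apply Rabs_eq_0 in H1. lra.
    + apply alt_lt_R in Lt as [k [Ek Sk]]. unfold Defs.shift in Ek, Sk. simpl in Ek, Sk.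
      pose proof (track be A x k Hb HS Ek) as Tr.
      rewrite (V_step be A x k Hb (proj1 HS)), (t_rel be k Hb) in Tr.
      pose proof (Q _ (SS_shift be A x (S k) HS)) as Qk.
      assert (inI be (lb be)) by (unfold inI; lra).
      pose proof (orb_I be (lb be) (S k) Hb H) as Ik. unfold inI in Ik.
      set (Z := (INR (x k) - INR (bx be (lb be) k)) + (V be (Defs.shift x (S k)) - orb be (lb be) (S k))) in *.
      assert (Tr2 : V be x - lb be = (/ - be) ^ (S k) * Z) by (rewrite Tr; unfold Z; simpl; ring).
      rewrite q_pow in Tr2 by auto. replace (k + 1)%nat with (S k) in Sk by lia.
      set (p := (/ be) ^ S k) in *.
      assert (Hp : 0 < p <= / be).
      { unfold p. split. apply pow_lt; lra. simpl. pose proof (pow_le1 (/ be) k ltac:(lra)).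
        assert (/ be * (/ be) ^ k <= / be * 1) by (apply Rmult_le_compat_l; lra). lra. }
      destruct (sgn_cases (S k)) as [s|s]; rewrite s in Tr2, Sk.
      * assert (Z >= - E) by (unfold Z; lra).
        assert (p * Z >= p * - E) by (apply Rmult_ge_compat_l; lra).
        assert (E * p <= E * / be) by (apply Rmult_le_compat_l; lra). nra.
      * assert (Z <= E) by (unfold Z; lra).
        assert (p * Z <= p * E) by (apply Rmult_le_compat_l; lra).
        assert (E * p <= E * / be) by (apply Rmult_le_compat_l; lra). nra.
  - rewrite St.
    assert (Hr : lb be + 1 = - lb be * / be).
    { apply (Rmult_eq_reg_l be); [|lra]. rewrite Hl2. field. lra. }
    rewrite Hr.
    assert (/ be * (V be (Defs.shift x 1) - lb be + E) >= 0).
    { apply Rle_ge, Rmult_le_pos; lra. }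
    assert (/ be * INR (x 0%nat) >= 0) by (apply Rle_ge, Rmult_le_pos; lra).
    nra.
Qed.

Lemma SS_range be A x : 1 < be -> SS be A x -> lb be <= V be x <= lb be + 1.
Proof.
  intros Hb HS. pose proof (ib_lt be Hb) as Ib. destruct (lb_facts be Hb) as [Hl1 Hl2].
  set (E0 := INR A / (be - 1) + 1).
  assert (HE0 : 0 <= E0).
  { unfold E0. assert (0 <= INR A / (be - 1)) by (apply Rdiv_le_0_compat; [apply pos_INR|lra]). lra. }
  assert (Qn : forall n y, SS be A y -> lb be - E0 * (/ be) ^ n <= V be y <= lb be + 1 + E0 * (/ be) ^ n).
  { induction n; intros y Hy.
    - simpl. pose proof (V_bound be A y Hb (proj1 Hy)). apply Rabs_le_between in H. unfold E0. lra.
    - replace (E0 * (/ be) ^ S n) with (E0 * (/ be) ^ n * / be) by (simpl; ring).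
      apply (Qstep be A); auto. apply Rmult_le_pos; auto. apply pow_le; lra. }
  split.
  - assert (lb be - V be x <= 0); [|lra]. apply (lim_le be _ E0 Hb). intro k. pose proof (Qn k x HS). lra.
  - assert (V be x - (lb be + 1) <= 0); [|lra]. apply (lim_le be _ E0 Hb). intro k. pose proof (Qn k x HS). lra.
Qed.

Lemma claimC d be i j : 1 < be -> alt_lyndon d -> alt_lt (bx be (lb be)) d -> (1 <= i)%nat ->
  ((-1) ^ Z.of_nat i * (Z.of_nat (d (i - 1)%nat) - Z.of_nat j) < 0)%Z ->
  fbeta be (map d (seq 0 (i - 1)) ++ [j]) >= lb be.
Proof.
  intros Hb Hd Hlt Hi Hs. pose proof (ib_lt be Hb) as Ib. destruct (lb_facts be Hb) as [Hl1 Hl2].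
  set (n := (i - 1)%nat) in *. replace i with (S n) in Hs by (unfold n; lia).
  assert (Dig : forall k, (d k <= d 0%nat)%nat).
  { intro k. pose proof (digit_le _ _ (Hd k)). unfold Defs.shift in H. rewrite Nat.add_0_r in H. exact H. }
  assert (HS : forall m, SS be (d 0%nat) (Defs.shift d m)).
  { intro m. split. intro i0; unfold Defs.shift; auto.
    intro k. rewrite shift_shift. right. eapply alt_lt_le; eauto. }
  pose proof (SS_range be _ _ Hb (HS 0%nat)) as R0. rewrite V_shift0 in R0.
  pose proof (SS_range be _ _ Hb (HS (S n))) as R1.
  pose proof (V_split be _ d n Hb Dig) as Sp.
  pose proof (V_step be _ d n Hb Dig) as St.
  unfold fbeta. rewrite fbeta_app. simpl. rewrite length_map, length_seq.
  fold (fbeta be (map d (seq 0 n))).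
  assert (Sg : (-1) ^ (S n) * (INR (d n) - INR j) <= -1).
  { assert (Z : ((-1) ^ Z.of_nat (S n) * (Z.of_nat (d n) - Z.of_nat j) <= -1)%Z) by lia.
    apply IZR_le in Z. rewrite mult_IZR, sgn_IZR, minus_IZR, <- !INR_IZR_INZ in Z. exact Z. }
  rewrite Rinv_mult, <- pow_inv.
  replace (/ - be * (/ - be) ^ n) with ((/ - be) ^ S n) by reflexivity.
  rewrite q_pow by auto.
  set (p := (/ be) ^ S n). assert (0 < p) by (apply pow_lt; lra).
  rewrite St in Sp. replace ((/ - be) ^ n * (/ - be * (INR (d n) + V be (Defs.shift d (S n))))) with
    ((/ - be) ^ S n * (INR (d n) + V be (Defs.shift d (S n)))) in Sp by (simpl; ring).
  rewrite q_pow in Sp by auto. fold p in Sp.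
  destruct (sgn_cases (S n)) as [s|s]; rewrite s in Sp, Sg |- *.
  - assert (p * (INR j - INR (d n) - V be (Defs.shift d (S n))) >= 0).
    { apply Rle_ge, Rmult_le_pos; lra. }
    nra.
  - assert (p * (INR (d n) - INR j + V be (Defs.shift d (S n))) >= 0).
    { apply Rle_ge, Rmult_le_pos; lra. }
    nra.
Qed.

Lemma cont_fbeta w k x0 : x0 <> 0 -> continuity_pt (fun y => fbeta_from y k w) x0.
Proof.
  intro H. revert k. induction w as [|a w IH]; intro k; simpl.
  - apply continuity_pt_const. intros u v; reflexivity.
  - apply (continuity_pt_ext (plus_fct (mult_real_fct (INR a) (inv_fct (fun y => (-1) ^ k * y ^ k)))
             (fun y => fbeta_from y (S k) w))).
    { intro y. unfold plus_fct, mult_real_fct, inv_fct. f_equal. f_equal. f_equal.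
      replace (- y) with (-1 * y) by ring. rewrite Rpow_mult_distr. reflexivity. }
    apply continuity_pt_plus; [|apply IH].
    apply continuity_pt_scal. apply continuity_pt_inv.
    + apply (continuity_pt_ext (mult_real_fct ((-1) ^ k) (fun y => y ^ k))).
      { intro; reflexivity. }
      apply continuity_pt_scal. apply derivable_continuous_pt, derivable_pt_pow.
    + apply Rmult_integral_contrapositive. split; apply pow_nonzero; lra.
Qed.

Lemma cont_g w x0 : 1 < x0 -> continuity_pt (fun y => fbeta y w + y / (y + 1)) x0.
Proof.
  intro H. apply (continuity_pt_ext (plus_fct (fun y => fbeta_from y 1 w) (mult_fct id (inv_fct (plus_fct id (fct_cte 1)))))).
  { intro y. reflexivity. }
  apply continuity_pt_plus. apply cont_fbeta; lra.
  apply continuity_pt_mult. apply continuity_pt_id.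
  apply continuity_pt_inv. apply continuity_pt_plus. apply continuity_pt_id. apply continuity_pt_const. intros u v; reflexivity.
  unfold plus_fct, id, fct_cte. lra.
Qed.

Lemma g_push w be : 1 < be -> fbeta be w + be / (be + 1) < 0 ->
  exists be', be < be' /\ fbeta be' w + be' / (be' + 1) < 0.
Proof.
  intros Hb Hg. pose proof (cont_g w be Hb) as C.
  unfold continuity_pt, continue_in, limit1_in, limit_in in C.
  destruct (C (- (fbeta be w + be / (be + 1))) ltac:(lra)) as [alp [Ha Hc]].
  exists (be + alp / 2). split. lra.
  specialize (Hc (be + alp / 2)). simpl in Hc. unfold R_dist, D_x, no_cond in Hc.
  assert (Hd : Rabs (be + alp / 2 - be) < alp) by (rewrite Rabs_pos_eq; lra).
  assert (Hne : be <> be + alp / 2) by (intro; lra). specialize (Hc (conj (conj I Hne) Hd)). apply Rabs_def2 in Hc. lra.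
Qed.

Lemma entropy_contra (H : nat -> nat) be be' : 1 < be -> be < be' ->
  (forall n, be' ^ n - 1 <= INR (H n)) ->
  Un_cv (fun n => ln (INR (H n)) / INR n) (ln be) -> False.
Proof.
  intros Hb Hbb Hh Hc.
  assert (Hl : ln be < ln be') by (apply ln_increasing; lra).
  set (eps := (ln be' - ln be) / 2).
  assert (He : eps > 0) by (unfold eps; lra).
  destruct (Hc eps He) as [N HN].
  destruct (arch_nat (Rmax (/ (be' - 1)) (ln 2 / eps))) as [K HK].
  set (n := (N + K)%nat).
  assert (HnK : INR K <= INR n) by (apply le_INR; unfold n; lia).
  assert (H1 : / (be' - 1) < INR n) by (pose proof (Rmax_l (/ (be' - 1)) (ln 2 / eps)); lra).
  assert (H2 : ln 2 / eps < INR n) by (pose proof (Rmax_r (/ (be' - 1)) (ln 2 / eps)); lra).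
  assert (Hn0 : 0 < INR n).
  { assert (0 < / (be' - 1)) by (apply Rinv_0_lt_compat; lra). lra. }
  assert (Hpow : 2 <= be' ^ n).
  { pose proof (Rle_pow_lin (be' - 1) n ltac:(lra)). replace (1 + (be' - 1)) with be' in H0 by ring.
    apply (Rmult_lt_compat_r (be' - 1)) in H1; [|lra]. rewrite Rinv_l in H1 by lra. lra. }
  specialize (HN n ltac:(unfold n; lia)). unfold R_dist in HN. apply Rabs_def2 in HN.
  specialize (Hh n).
  assert (Hh2 : be' ^ n / 2 <= INR (H n)) by lra.
  assert (Hpos : 0 < be' ^ n / 2) by lra.
  assert (Hln : ln (be' ^ n / 2) <= ln (INR (H n))).
  { destruct (Req_dec (be' ^ n / 2) (INR (H n))) as [E|E]. rewrite E; lra.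
    left. apply ln_increasing; lra. }
  unfold Rdiv at 1 in Hln. rewrite ln_mult, ln_Rinv, ln_pow in Hln by (try apply pow_lt; lra).
  set (u := ln (INR (H n)) / INR n) in *.
  assert (Eu : u * INR n = ln (INR (H n))) by (unfold u; field; lra).
  assert (Hlt : u * INR n < (ln be + eps) * INR n) by (apply Rmult_lt_compat_r; lra).
  assert (Hln2 : ln 2 < INR n * eps).
  { apply (Rmult_lt_compat_r eps) in H2; auto. unfold Rdiv in H2. rewrite Rmult_assoc, Rinv_l in H2 by lra. lra. }
  assert (ln be + eps = ln be' - eps) by (unfold eps; lra).
  nra.
Qed.

Theorem corollary2 (d : iword) (beta : R) (i j : nat) :
  alt_lyndon d ->
  1 < beta ->
  has_entropy d (ln beta) ->
  (1 <= i)%nat ->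
  inLM d (map d (seq 0 (i - 1)) ++ [j]) ->
  ((-1) ^ Z.of_nat i * (Z.of_nat (d (i - 1)%nat) - Z.of_nat j) < 0)%Z ->
  fbeta beta (map d (seq 0 (i - 1)) ++ [j]) >= - (beta / (beta + 1)).
Proof.
  intros Hd Hb [H [HH Hc]] Hi _ Hs.
  set (w := map d (seq 0 (i - 1)) ++ [j]).
  destruct (Rlt_or_le (fbeta beta w + beta / (beta + 1)) 0) as [Hg|Hg]; [|lra].
  exfalso. destruct (g_push w beta Hb Hg) as [be' [Hbb Hg']].
  assert (Hb' : 1 < be') by lra.
  destruct (trichotomy d (bx be' (lb be'))) as [E|[L|L]].
  - apply (entropy_contra H beta be'); auto. intro n. apply (count_lower d be' n); auto. left; auto.
  - apply (entropy_contra H beta be'); auto. intro n. apply (count_lower d be' n); auto. right; auto.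
  - pose proof (claimC d be' i j Hb' Hd L Hi Hs). fold w in H0. unfold lb in H0. lra.
Qed.
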